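(* Let $\phi:\mathbb{R}^{d}\to\mathbb{R}^{d}$ be a $C^{2}$ diffeomorphism, $x_{1},y_{1}\in\mathbb{R}^{d}$, $x_{j}=\phi^{j-1}(x_{1})$, $y_{j}=\phi^{j-1}(y_{1})$. Then the following matrices have rank equal to their number of rows: (a) the matrix $\binom{V(x_{1})}{V(y_{1})}$, provided $x_{1},\ldots,x_{D-1},y_{1},\ldots,y_{D-1}$ are distinct; (b) the matrix $\binom{V(x_{1})}{\mathfrak{m}_{k}}$, where $\mathfrak{m}_{k}$ consists of the first $k$ rows of $V(y_{1})$, provided $x_{1},\ldots,x_{D-1},y_{1},\ldots,y_{k}$ are distinct; (c) for an integer $D^{+}\leq2D$, the $(D^{+}-1)\times D_{\alpha}$ matrix whose rows $j=1,\ldots,D^{+}-1$ are the gradients with respect to $c$ at $c=0$ of $c\mapsto\pi_{1}\phi_{c}^{j}(x_{1})$, provided $x_{1},\ldots,x_{D^{+}-1}$ are distinct.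
   Context: $\pi_{1}$ is the first coordinate projection, $\mathbf{e}_{1}=(1,0,\ldots,0)$. For a multi-index $\alpha\in\mathbb{Z}_{\geq0}^{d}$, $p_{\alpha}(x)=\prod_i(\pi_{i}x)^{\alpha_{i}}$; $\mathcal{I}_{2D-1}$ is the set of multi-indices with $|\alpha|\leq2D-1$, of cardinality $D_{\alpha}$. For $c=(c_{\alpha})\in\mathbb{R}^{D_{\alpha}}$, $\phi_{c}(x)=\phi(x)+\mathbf{e}_{1}\sum_{\alpha\in\mathcal{I}_{2D-1}}c_{\alpha}p_{\alpha}(x)$. For $z\in\mathbb{R}^{d}$, $V(z)$ is the $(D-1)\times D_{\alpha}$ matrix whose row $j$ ($j=1,\ldots,D-1$) is the gradient with respect to $c$ at $c=0$ of $c\mapsto\pi_{1}\phi_{c}^{j}(z)$. *)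

(* Defs.v *)
From HB Require Import structures.
From mathcomp Require Import all_boot all_order all_algebra.
From mathcomp Require Import all_classical all_reals all_analysis.
Set Implicit Arguments. Unset Strict Implicit. Unset Printing Implicit Defensive.
Import Order.TTheory GRing.Theory Num.Theory.
Import numFieldNormedType.Exports.
Local Open Scope ring_scope.

Section Defs.
Variables (R : realType) (d D : nat).

Definition ej (i : 'I_d) : 'rV[R]_d := delta_mx 0 i.

(* e1 = (1,0,...,0) and first coordinate projection (d >= 1 assumed in the theorem) *)
Definition e1 : 'rV[R]_d := \row_(i < d) ((val i == 0%N)%:R).
Definition pi1 (x : 'rV[R]_d) : R := \sum_(i < d | val i == 0%N) x 0 i.

Definition C2 (f : 'rV[R]_d -> 'rV[R]_d) : Prop :=
  [/\ forall x i, derivable f x (ej i),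
      forall i, continuous ('D_(ej i) f),
      forall i j x, derivable ('D_(ej i) f) x (ej j)
    & forall i j, continuous ('D_(ej j) ('D_(ej i) f))].

Definition C2_diffeo (f : 'rV[R]_d -> 'rV[R]_d) : Prop :=
  exists g, [/\ cancel f g, cancel g f, C2 f & C2 g].

(* multi-indices alpha in Z_{>=0}^d with |alpha| <= 2D-1 *)
Definition mindex := {a : {ffun 'I_d -> 'I_(2 * D)} | (\sum_i val (a i) < 2 * D)%N}.
Definition Dalpha := #|{: mindex}|.

Definition palpha (a : mindex) (x : 'rV[R]_d) : R := \prod_i (x 0 i) ^+ val (val a i).

Definition phic (phi : 'rV[R]_d -> 'rV[R]_d) (c : 'rV[R]_Dalpha) (x : 'rV[R]_d) :=
  phi x + (\sum_(a : mindex) c 0 (enum_rank a) * palpha a x) *: e1.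

Definition Gmat (phi : 'rV[R]_d -> 'rV[R]_d) (n : nat) (z : 'rV[R]_d) : 'M[R]_(n, Dalpha) :=
  \matrix_(j < n, k < Dalpha)
     'D_(delta_mx 0 k : 'rV[R]_Dalpha) (fun c => pi1 (iter j.+1 (phic phi c) z)) 0.

Definition Vmat phi z := Gmat phi (D - 1) z.

Definition mfirst phi k (hk : (k <= D - 1)%N) y : 'M[R]_(k, Dalpha) :=
  \matrix_(i < k) row (widen_ord hk i) (Vmat phi y).

Definition orbit_seq (phi : 'rV[R]_d -> 'rV[R]_d) (n : nat) x :=
  [seq iter i phi x | i <- iota 0 n].

End Defs.

(* Main.v *)
Require Import Defs.
From HB Require Import structures.
From mathcomp Require Import all_boot all_order all_algebra.
From mathcomp Require Import all_classical all_reals all_analysis.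
From mathcomp Require Import ring zify.
Import Order.TTheory GRing.Theory Num.Theory.
Import numFieldNormedType.Exports.
Set Implicit Arguments. Unset Strict Implicit. Unset Printing Implicit Defensive.

Module MA.
Local Open Scope ring_scope.
Local Open Scope classical_set_scope.

Section PartA.
Variables (R : realType) (d : nat).
Implicit Types (f : 'rV[R]_d -> 'rV[R]_d).

Lemma coord_cont (M : 'rV[R]_d) j : {for M, continuous (fun N : 'rV[R]_d => N 0 j)}.
Proof. exact: differentiable_continuous (differentiable_coord _ _ _). Qed.

Lemma line_is_derive f p v j s : derivable f (p + s *: v) v ->
  is_derive s 1 (fun s : R => f (p + s *: v) 0 j) (('D_v f (p + s *: v)) 0 j).
Proof.
set y := p + s *: v => H.
have H2 := continuous_cvg _ (@coord_cont ('D_v f y) j) H.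
have E : (fun h : R => h^-1 *: (((fun s0 : R => f (p + s0 *: v) 0 j) \o shift s) (h *: 1)
            - f (p + s *: v) 0 j)) =
   ((fun N : 'rV[R]_d => N 0 j) \o (fun h : R => h^-1 *: ((f \o shift y) (h *: v) - f y))).
  apply/funext => h /=; rewrite !mxE /y; congr (_ * (_ - _)).
  have -> : h *: (1:R) = h by rewrite [LHS]mulr1.
  by rewrite scalerDl addrCA addrA.
have H3 : (fun h : R => h^-1 *: (((fun s0 : R => f (p + s0 *: v) 0 j) \o shift s) (h *: 1)
            - f (p + s *: v) 0 j)) @ 0^' --> ('D_v f y) 0 j.
  rewrite E; exact: H2.
apply: DeriveDef; first exact: (cvgP _ H3).
exact: cvg_lim H3.
Qed.


Lemma mvt_coord f p v j h : (forall s : R, derivable f (p + s *: v) v) ->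
  exists2 t : R, `|t| <= `|h| &
    f (p + h *: v) 0 j - f p 0 j = h * ('D_v f (p + t *: v)) 0 j.
Proof.
move=> fd.
set g := fun s : R => f (p + s *: v) 0 j.
set dg := fun s : R => ('D_v f (p + s *: v)) 0 j.
have gd : forall s : R, is_derive s (1:R) g (dg s) by move=> s; exact: line_is_derive.
have gc : continuous g.
  move=> s; apply: differentiable_continuous; apply/derivable1_diffP.
  by have [] := gd s.
have g0 : g 0 = f p 0 j by rewrite /g scale0r addr0.
have [h0|h0] := leP 0 h.
  have [c /andP[c0 ch] E] := @MVT_segment R g dg 0 h h0 (fun x _ => gd x)
     (continuous_subspaceT gc).
  exists c; first by rewrite !ger0_norm // (le_trans c0 ch).
  by rewrite -g0 -/(g h) E subr0 mulrC.
have [c /andP[c0 ch] E] := @MVT_segment R g dg h 0 (ltW h0) (fun x _ => gd x)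
     (continuous_subspaceT gc).
exists c; first by rewrite !ler0_norm ?lerN2 // ltW.
by rewrite -g0 -/(g h) -opprB E sub0r mulrN opprK mulrC.
Qed.


Lemma norm_le_entries (M : 'rV[R]_d) (c : R) : 0 <= c ->
  (forall j, `|M 0 j| <= c) -> `|M| <= c.
Proof.
move=> c0 H; rewrite [leLHS]/Num.Def.normr /= mx_normrE.
apply: bigmax_le => // -[i j] _ /=.
by rewrite (ord1 i).
Qed.

Lemma entry_le_norm (M : 'rV[R]_d) j : `|M 0 j| <= `|M|.
Proof.
rewrite [leRHS]/Num.Def.normr /= mx_normrE.
exact: (le_bigmax _ _ (0, j)).
Qed.


Lemma est_diff f x (del eps' : R) (h : 'rV[R]_d) :
  (forall y i, derivable f y (ej R i)) ->
  (forall y i, `|y - x| < del -> `|'D_(ej R i) f y - 'D_(ej R i) f x| <= eps') ->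
  `|h| < del ->
  `|f (h + x) - f x - \sum_(i < d) h 0 i *: 'D_(ej R i) f x| <= d%:R * (`|h| * eps').
Proof.
move=> fd fc hd.
pose p (k : nat) := x + \row_(m < d) (if (m < k)%N then h 0 m else 0).
have p0 : p 0%N = x.
  rewrite /p [X in _ + X](_ : _ = 0) ?addr0 //.
  by apply/rowP => m; rewrite !mxE.
have pd : p d = h + x.
  rewrite /p addrC; congr (_ + _); apply/rowP => m; by rewrite mxE ltn_ord.
have pS (i : 'I_d) : p i.+1 = p i + h 0 i *: ej R i.
  rewrite /p -addrA; congr (_ + _); apply/rowP => m; rewrite !mxE /=.
  case: (ltngtP m i) => [mi|im|/val_inj mi].
  - have -> : (m == i) = false by apply/eqP => E; rewrite E ltnn in mi.
    by rewrite ltnS ltnW // mulr0 addr0.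
  - have -> : (m == i) = false by apply/eqP => E; rewrite E ltnn in im.
    by rewrite ltnS leqNgt im /= mulr0 addr0.
  - by rewrite mi ltnSn eqxx mulr1 add0r.
have tele : f (h + x) - f x = \sum_(i < d) (f (p i.+1) - f (p i)).
  rewrite -pd -p0 -(big_mkord xpredT (fun k => f (p k.+1) - f (p k))).
  by rewrite telescope_sumr.
rewrite tele -sumrB.
apply: le_trans (ler_norm_sum _ _ _) _.
have -> : d%:R * (`|h| * eps') = \sum_(i < d) (`|h| * eps').
  by rewrite sumr_const card_ord mulr_natl.
apply: ler_sum => i _.
have eps0 : 0 <= eps'.
  by apply: le_trans (fc x i _); rewrite ?subrr ?normr0 // (le_lt_trans _ hd).
rewrite pS.
apply: norm_le_entries; first by rewrite mulr_ge0.
move=> j.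
have [t ht E] := @mvt_coord f (p i) (ej R i) j (h 0 i) (fun s => fd (p i + s *: ej R i) i).
rewrite !mxE E -mulrBr normrM.
apply: ler_pM => //; first exact: entry_le_norm.
set y := p i + t *: ej R i.
have hy : `|y - x| < del.
  apply: le_lt_trans hd; apply: norm_le_entries => // m.
  have sc : forall a b c : R, a + b + c - a = b + c.
    by move=> a b c; rewrite addrAC [a + b]addrC addrK.
  rewrite /y /p !mxE /= sc.
  case: (ltngtP m i) => [mi|im|/val_inj mi].
  - have -> : (m == i) = false by apply/eqP => E'; rewrite E' ltnn in mi.
    by rewrite mulr0 addr0 entry_le_norm.
  - have -> : (m == i) = false by apply/eqP => E'; rewrite E' ltnn in im.
    by rewrite mulr0 addr0 normr0.
  - rewrite mi eqxx mulr1 add0r.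
    by apply: le_trans ht _; apply: entry_le_norm.
apply: le_trans (fc y i hy).
by have := entry_le_norm ('D_(ej R i) f y - 'D_(ej R i) f x) j; rewrite !mxE.
Qed.


Lemma C1_diff f : (forall y i, derivable f y (ej R i)) ->
  (forall i, continuous ('D_(ej R i) f)) -> forall x, differentiable f x.
Proof.
move=> fd fc x.
pose Lf := fun w : 'rV[R]_d => \sum_(i < d) w 0 i *: 'D_(ej R i) f x.
have Llin : linear Lf.
  move=> a u v; rewrite /Lf scaler_sumr -big_split; apply: eq_bigr => i _ /=.
  by rewrite !mxE scalerDl scalerA.
pose LM := GRing.isLinear.Build _ _ _ _ Lf Llin.
pose L : {linear 'rV[R]_d -> 'rV[R]_d} := HB.pack Lf LM.
have Lc : continuous L.
  move=> w; apply: differentiable_continuous.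
  have -> : (L : _ -> _) = \sum_(i < d) (fun w : 'rV[R]_d => w 0 i *: 'D_(ej R i) f x).
    by rewrite fct_sumE.
  apply: differentiable_sum => i; apply: differentiableZl.
  exact: differentiable_coord.
have Ho : f \o shift x = cst (f x) + L +o_ 0 id.
  apply/eqaddoP => eps eps0.
  pose e' := eps / d.+1%:R.
  have e'0 : 0 < e' by rewrite divr_gt0.
  have : \forall y \near x, forall i, `|'D_(ej R i) f y - 'D_(ej R i) f x| <= e'.
    have H1 : forall i, \forall y \near x, `|'D_(ej R i) f y - 'D_(ej R i) f x| <= e'.
      move=> i; have H := fc i x.
      have := (@cvgrPdist_le _ _ _ (nbhs x) _ ('D_(ej R i) f) ('D_(ej R i) f x)).1 H e' e'0.
      move=> Hn; near=> y; rewrite distrC; near: y; exact: Hn.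
    exact: filter_forall H1.
  move=> /nbhs_ballP [del /= del0 Hdel].
  near=> h.
  have hdel : `|h| < del.
    near: h. rewrite !near_simpl. exact: nbhs0_lt.
  have Hy : forall y i, `|y - x| < del ->
      `|'D_(ej R i) f y - 'D_(ej R i) f x| <= e'.
    move=> y i yx; apply: (Hdel y); rewrite -ball_normE /ball_ /= distrC //.
  rewrite /= opprD addrA.
  apply: le_trans (est_diff fd Hy hdel) _.
  rewrite /e' mulrA [d%:R * _]mulrC -mulrA mulrA [eps * _]mulrC.
  rewrite -mulrA [eps * `|h|]mulrC; apply: ler_wpM2l => //.
  rewrite mulrA; apply: ler_piMl; first exact: ltW.
  by rewrite ler_pdivrMr // mul1r ler_nat.
apply/diff_locallyP; rewrite (diff_unique Lc Ho); split => //.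
Unshelve. all: by end_near.
Qed.

End PartA.
End MA.
Import MA.

Module MB.
Local Open Scope ring_scope.
Local Open Scope classical_set_scope.

Section Big.
Variables (R : realType) (V : normedModType R).
Lemma diff_prod (I : Type) (r : seq I) (g : I -> V -> R) x0 :
  (forall i, differentiable (g i) x0) ->
  differentiable (fun x => \prod_(i <- r) g i x) x0.
Proof.
move=> gd; elim: r => [|a r IH].
  have -> : (fun x => \prod_(i <- [::]) g i x) = cst 1.
    by apply/funext => x; rewrite big_nil.
  exact: differentiable_cst.
have -> : (fun x => \prod_(i <- a :: r) g i x) = g a * (fun x => \prod_(i <- r) g i x).
  by apply/funext => x; rewrite big_cons.
exact: differentiableM.
Qed.

Lemma diff_sum (I : Type) (r : seq I) (W : normedModType R) (g : I -> V -> W) x0 :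
  (forall i, differentiable (g i) x0) ->
  differentiable (fun x => \sum_(i <- r) g i x) x0.
Proof.
move=> gd; elim: r => [|a r IH].
  have -> : (fun x => \sum_(i <- [::]) g i x) = cst 0.
    by apply/funext => x; rewrite big_nil.
  exact: differentiable_cst.
have -> : (fun x => \sum_(i <- a :: r) g i x) = g a + (fun x => \sum_(i <- r) g i x).
  by apply/funext => x; rewrite big_cons.
exact: differentiableD.
Qed.
End Big.

Section PartB.
Variables (R : realType) (d D : nat).
Variable phi : 'rV[R]_d -> 'rV[R]_d.
Hypothesis phid : forall x, differentiable phi x.

Definition Qv (v : 'rV[R]_(Dalpha d D)) (x : 'rV[R]_d) : R :=
  \sum_(a : mindex d D) v 0 (enum_rank a) * palpha a x.

Lemma palpha_diff (a : mindex d D) (x : 'rV[R]_d) : differentiable (palpha a) x.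
Proof.
apply: diff_prod => i.
case: (val (val a i) : nat) => [|n].
  have -> : (fun x : 'rV[R]_d => x 0 i ^+ 0) = cst 1 by apply/funext => y; rewrite expr0.
  exact: differentiable_cst.
rewrite -(exprfctE (fun x : 'rV[R]_d => x 0 i)).
apply: differentiableX; exact: differentiable_coord.
Qed.

Lemma Qv_diff v (x : 'rV[R]_d) : differentiable (Qv v) x.
Proof.
apply: diff_sum => a.
have -> : (fun x => v 0 (enum_rank a) * palpha a x) = cst (v 0 (enum_rank a)) * palpha a.
  by apply/funext.
apply: differentiableM; [exact: differentiable_cst | exact: palpha_diff].
Qed.

Lemma phic_scale (v : 'rV[R]_(Dalpha d D)) (t : R) x :
  phic phi (t *: v) x = phi x + (t * Qv v x) *: e1 R d.
Proof.
rewrite /phic /Qv mulr_sumr; congr (_ + _ *: _); apply: eq_bigr => a _.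
by rewrite mxE mulrA.
Qed.

Variables (v : 'rV[R]_(Dalpha d D)) (z : 'rV[R]_d).
Definition w (j : nat) (t : R) := iter j (phic phi (t *: v)) z.

Lemma w0 j : w j 0 = iter j phi z.
Proof.
rewrite /w; have -> : phic phi (0 *: v) = phi.
  by apply/funext => x; rewrite phic_scale mul0r scale0r addr0.
by [].
Qed.

Lemma wS j : w j.+1 = (phi \o w j) + (fun t : R => (t * Qv v (w j t)) *: e1 R d).
Proof. by apply/funext => t; rewrite /w iterS phic_scale. Qed.

Lemma w_diff j t : differentiable (w j) t.
Proof.
elim: j t => [|j IH] t.
  exact: differentiable_cst.
rewrite wS; apply: differentiableD.
  by apply: differentiable_comp.
apply: differentiableZl.
have -> : (fun t : R => t * Qv v (w j t)) = id * (Qv v \o w j) by [].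
apply: differentiableM => //.
by apply: differentiable_comp => //; exact: Qv_diff.
Qed.

Lemma w_deriv j : 'D_1 (w j.+1) 0 = 'd phi (iter j phi z) ('D_1 (w j) 0) + Qv v (iter j phi z) *: e1 R d.
Proof.
have dk : differentiable (fun t : R => t * Qv v (w j t)) 0.
  have -> : (fun t : R => t * Qv v (w j t)) = id * (Qv v \o w j) by [].
  apply: differentiableM => //.
  by apply: differentiable_comp => //; [exact: w_diff | exact: Qv_diff].
rewrite wS deriveD; last 2 first.
- apply: diff_derivable; apply: differentiable_comp => //; exact: w_diff.
- by apply: diff_derivable; apply: differentiableZl.
rewrite -w0; congr (_ + _).
  rewrite deriveE; last by apply: differentiable_comp => //; exact: w_diff.
  by rewrite diff_comp ?deriveE //; exact: w_diff.
rewrite deriveE; last by apply: differentiableZl.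
rewrite diffZl //= -deriveE //.
have -> : (fun t : R => t * Qv v (w j t)) = id * (Qv v \o w j) by [].
rewrite deriveM //; last first.
  by apply: diff_derivable; apply: differentiable_comp => //; [exact: w_diff | exact: Qv_diff].
by rewrite derive_id /= scale0r add0r /GRing.scale /= mulr1.
Qed.

End PartB.

End MB.
Import MB.

Module MC.
Local Open Scope ring_scope.

Section Tri.
Variable R : realType.

Definition BlockOK n m (G P : 'M[R]_(n, m)) :=
  forall i : 'I_n, (row i G - row i P <= \sum_(l < n | (l < i)%N) <<row l P>>)%MS.

Lemma tri_rowfree n m (G P : 'M[R]_(n, m)) : BlockOK G P -> row_free P -> row_free G.
Proof.
move=> HB fP.
have PG : (P <= G)%MS.
  apply/row_subP.
  suff H : forall k (i : 'I_n), (i < k)%N -> (row i P <= G)%MS.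
    by move=> i; apply: (H i.+1).
  elim=> [|k IH] i //; rewrite ltnS leq_eqVlt => /orP [/eqP ik|]; last exact: IH.
  have -> : row i P = row i G - (row i G - row i P) by rewrite opprB addrC subrK.
  apply: addmx_sub; first exact: row_sub.
  rewrite (eqmx_opp _); apply: submx_trans (HB i) _.
  apply/sumsmx_subP => l li; rewrite genmxE; apply: IH; by rewrite -ik.
rewrite /row_free eqn_leq rank_leq_row /=.
by apply: leq_trans (mxrankS PG); move/eqP: fP => ->.
Qed.

Lemma BlockOK_col n1 n2 m (G1 P1 : 'M[R]_(n1, m)) (G2 P2 : 'M[R]_(n2, m)) :
  BlockOK G1 P1 -> BlockOK G2 P2 -> BlockOK (col_mx G1 G2) (col_mx P1 P2).
Proof.
move=> H1 H2 i.
have [[i1 ->]|[i2 ->]] : (exists i1 : 'I_n1, i = lshift n2 i1) \/ (exists i2 : 'I_n2, i = rshift n1 i2).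
  by rewrite -(splitK i); case: (fintype.split i) => [i1|i2]; [left|right]; eexists.
- rewrite !rowKu; apply: submx_trans (H1 i1) _.
  apply/sumsmx_subP => l li; apply: (sumsmx_sup (lshift n2 l)) => //.
  by rewrite rowKu.
- rewrite !rowKd; apply: submx_trans (H2 i2) _.
  apply/sumsmx_subP => l li; apply: (sumsmx_sup (rshift n1 l)).
    by rewrite /= ltn_add2l.
  by rewrite rowKd.
Qed.

Lemma BlockOK_trunc n m k (hk : (k <= n)%N) (G P : 'M[R]_(n, m)) :
  BlockOK G P ->
  BlockOK (\matrix_(i < k) row (widen_ord hk i) G) (\matrix_(i < k) row (widen_ord hk i) P).
Proof.
move=> H i; rewrite !rowK; apply: submx_trans (H _) _.
apply/sumsmx_subP => l li.
have lk : (l < k)%N by apply: leq_trans li _; rewrite /=; exact: ltnW (ltn_ord i).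
apply: (sumsmx_sup (Ordinal lk)) => //.
rewrite rowK; have -> : widen_ord hk (Ordinal lk) = l by apply: val_inj.
by [].
Qed.

End Tri.

Section Eval.
Variables (R : realType) (d D : nat).

Definition Prow (x : 'rV[R]_d) : 'rV[R]_(Dalpha d D) := \row_k palpha (enum_val k) x.

Definition mono (s : seq 'I_d) (x : 'rV[R]_d) : R := \prod_(c <- s) x 0 c.

Lemma mono_count s x : mono s x = \prod_i x 0 i ^+ count_mem i s.
Proof.
elim: s => [|c s IH] /=; first by rewrite /mono big_nil big1 // => i _; rewrite expr0.
rewrite /mono big_cons -/(mono s x) IH.
under [RHS]eq_bigr do rewrite exprD.
rewrite big_split /=; congr (_ * _).
rewrite (bigD1 c) //= eqxx expr1 big1 ?mulr1 // => i ic.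
by rewrite eq_sym (negbTE ic) expr0.
Qed.

Lemma sum_count_mem (s : seq 'I_d) : (\sum_i count_mem i s)%N = size s.
Proof.
elim: s => [|c s IH] /=; first by rewrite big1.
rewrite big_split /= IH (bigD1 c) //= eqxx big1 // => i ic.
by rewrite eq_sym (negbTE ic).
Qed.

Lemma mono_palpha (s : seq 'I_d) : (size s < 2 * D)%N ->
  exists a : mindex d D, forall x, mono s x = palpha a x.
Proof.
move=> hs.
have hc : forall i, (count_mem i s < 2 * D)%N.
  by move=> i; apply: leq_ltn_trans (count_size _ _) hs.
pose f := [ffun i => Ordinal (hc i)].
have hf : (\sum_i val (f i) < 2 * D)%N.
  by under eq_bigr do rewrite ffunE /=; rewrite sum_count_mem.
exists (exist _ f hf) => x.
rewrite mono_count /palpha /=; apply: eq_bigr => i _.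
by rewrite ffunE.
Qed.

Definition InSpan (f : 'rV[R]_d -> R) :=
  exists c : 'rV[R]_(Dalpha d D), forall x, f x = \sum_k c 0 k * palpha (enum_val k) x.

Definition DegSpan (m : nat) (f : 'rV[R]_d -> R) :=
  exists s : seq (R * seq 'I_d), all (fun t => size t.2 <= m)%N s /\
    forall x, f x = \sum_(t <- s) t.1 * mono t.2 x.

Lemma Deg_InSpan m f : (m < 2 * D)%N -> DegSpan m f -> InSpan f.
Proof.
move=> hm [s [hs hf]].
suff [c hc] : exists c : 'rV[R]_(Dalpha d D), forall x,
    \sum_(t <- s) t.1 * mono t.2 x = \sum_k c 0 k * palpha (enum_val k) x.
  by exists c => x; rewrite hf hc.
elim: s hs {hf} => [|t s IH] /=.
  by move=> _; exists 0 => x; rewrite big_nil big1 // => k _; rewrite mxE mul0r.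
move=> /andP [ht hs]; have [c hc] := IH hs.
have [a ha] := mono_palpha (leq_ltn_trans ht hm).
exists (t.1 *: delta_mx 0 (enum_rank a) + c) => x.
rewrite big_cons hc ha.
under [RHS]eq_bigr do rewrite !mxE mulrDl.
rewrite big_split /=; congr (_ + _).
rewrite (bigD1 (enum_rank a)) //= enum_rankK !eqxx mulr1 big1 ?addr0 // => k hk.
by rewrite (negbTE hk) mulr0 mul0r.
Qed.

Lemma DegSpan_mul m f (al be : R) c : DegSpan m f ->
  DegSpan m.+1 (fun x => f x * (al * x 0 c + be)).
Proof.
move=> [s [hs hf]].
exists ([seq (t.1 * al, c :: t.2) | t <- s] ++ [seq (t.1 * be, t.2) | t <- s]).
split.
  rewrite all_cat !all_map; apply/andP; split; apply/allP => t ts /=.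
    by have := allP hs t ts.
  by apply: leq_trans (allP hs t ts) _.
move=> x; rewrite hf big_cat !big_map /= mulr_suml -big_split /=.
apply: eq_bigr => t _; rewrite /mono big_cons; ring.
Qed.

Lemma DegSpan_prod (I : Type) (r : seq I) (P : pred I) (al be : I -> R) (c : I -> 'I_d) :
  DegSpan (count P r) (fun x => \prod_(l <- r | P l) (al l * x 0 (c l) + be l)).
Proof.
elim: r => [|a r [s [hs hf]]].
  exists [:: (1, [::])]; split => // x.
  by rewrite big_nil big_seq1 /mono big_nil mulr1.
rewrite /=; case Pa: (P a).
  have := DegSpan_mul (al a) (be a) (c a) (ex_intro _ s (conj hs hf)).
  rewrite add1n; move=> [s' [hs' hf']]; exists s'; split => // x.
  by rewrite big_cons Pa -hf' mulrC.
by exists s; split => // x; rewrite big_cons Pa hf.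
Qed.


Lemma eval_rowfree n (hd : (0 < d)%N) (hn : (n <= 2 * D)%N) (q : 'I_n -> 'rV[R]_d) :
  injective q -> row_free (\matrix_(i < n) Prow (q i)).
Proof.
move=> qi.
pose i0 : 'I_d := Ordinal hd.
have Hsp : forall i : 'I_n, exists c : 'rV[R]_(Dalpha d D), forall j : 'I_n,
    \sum_k c 0 k * palpha (enum_val k) (q j) = (j == i)%:R.
  move=> i.
  pose cc l := odflt i0 [pick c | q i 0 c != q l 0 c].
  pose al l := (q i 0 (cc l) - q l 0 (cc l))^-1.
  pose be l := - q l 0 (cc l) * al l.
  pose P := fun l : 'I_n => l != i.
  have hdeg : (count P (enum 'I_n) < 2 * D)%N.
    apply: leq_trans hn.
    have E := count_predC P (enum 'I_n); rewrite size_enum_ord in E.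
    apply: (@leq_trans (count P (enum 'I_n) + count (predC P) (enum 'I_n))%N); last by rewrite E.
    rewrite -addn1 leq_add2l.
    by rewrite -has_count; apply/hasP; exists i; rewrite ?mem_enum //= /P eqxx.
  have [c hc] := Deg_InSpan hdeg (DegSpan_prod (enum 'I_n) P al be cc).
  exists c => j; rewrite -hc.
  have key l : l != i -> q i 0 (cc l) != q l 0 (cc l).
    move=> li; rewrite /cc; case: pickP => [c' //|H].
    have : q i = q l by apply/rowP => m; apply/eqP; have := H m; move/negbFE.
    by move/qi => il; rewrite il eqxx in li.
  have fac l y : al l * y + be l = al l * (y - q l 0 (cc l)).
    by rewrite /be; ring.
  case: (eqVneq j i) => [->|ji].
    rewrite big1 // => l li; rewrite fac mulrC mulfV //.
    by rewrite subr_eq0; exact: key.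
  rewrite big_mkcond (bigD1_seq j) ?mem_enum ?enum_uniq //= /P ji fac.
  by rewrite subrr mulr0 mul0r.
pose cf i := sval (cid (Hsp i)).
pose C := \matrix_(k < Dalpha d D, i < n) cf i 0 k.
have PC : (\matrix_(i < n) Prow (q i)) *m C = 1%:M.
  apply/matrixP => j i; rewrite !mxE -(svalP (cid (Hsp i)) j).
  by apply: eq_bigr => k _; rewrite !mxE mulrC.
rewrite /row_free eqn_leq rank_leq_row /=.
by rewrite -{1}(mxrank1 R n) -PC mxrankM_maxl.
Qed.

End Eval.

End MC.
Import MC.

Module MF.
Local Open Scope ring_scope.
Local Open Scope classical_set_scope.

Lemma dir_1d (R : realType) n (W : normedModType R) (F : 'rV[R]_n -> W) (u : 'rV[R]_n) :
  'D_u F 0 = 'D_1 (fun t : R => F (t *: u)) 0.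
Proof.
rewrite /derive.
suff -> : (fun h : R => h^-1 *: ((F \o shift 0) (h *: u) - F 0)) =
  (fun h : R => h^-1 *: (((fun t : R => F (t *: u)) \o shift 0) h%:A - F (0 *: u))) by [].
apply/funext => h /=; rewrite scale0r !addr0.
by rewrite [h%:A]mulr1.
Qed.

Section PartF.
Variables (R : realType) (d D : nat) (hd : (0 < d)%N).
Variable phi : 'rV[R]_d -> 'rV[R]_d.
Hypothesis phid : forall x, differentiable phi x.
Variable z : 'rV[R]_d.

Let i0 : 'I_d := Ordinal hd.

Lemma pi1E (x : 'rV[R]_d) : pi1 x = x 0 i0.
Proof.
rewrite /pi1 (bigD1 i0) //= big1 ?addr0 // => i /andP [h1 h2].
by exfalso; move/negP: h2; apply; apply/eqP/val_inj; apply/eqP.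
Qed.

Lemma e1_i0 : (e1 R d) 0 i0 = 1.
Proof. by rewrite mxE. Qed.

Lemma Qv_delta k (x : 'rV[R]_d) : Qv (delta_mx 0 k : 'rV[R]_(Dalpha d D)) x = palpha (enum_val k) x.
Proof.
rewrite /Qv (bigD1 (enum_val k)) //= enum_valK mxE !eqxx mul1r big1 ?addr0 // => a ha.
rewrite mxE eqxx /=; case: eqP => [E|]; last by rewrite mul0r.
by exfalso; move/negP: ha; apply; rewrite -E enum_rankK.
Qed.

Definition Dw j (k : 'I_(Dalpha d D)) := 'D_1 (w phi (delta_mx 0 k) z j) 0.

Lemma step j i : \row_k (Dw j.+1 k 0 i) =
  \sum_m ('d phi (iter j phi z) (delta_mx 0 m)) 0 i *: \row_k (Dw j k 0 m)
  + (e1 R d) 0 i *: Prow D (iter j phi z).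
Proof.
apply/rowP => k; rewrite [LHS]mxE /Dw w_deriv //.
rewrite [in LHS](row_sum_delta ('D_1 (w phi (delta_mx 0 k) z j) 0)) linear_sum.
rewrite !mxE summxE Qv_delta; congr (_ + _); last by rewrite mulrC.
by rewrite summxE; apply: eq_bigr => m _; rewrite linearZ !mxE mulrC.
Qed.


Definition S j := (\sum_(l < j) <<Prow D (iter l phi z)>>)%MS.

Lemma span j i : (\row_k (Dw j k 0 i) <= S j)%MS.
Proof.
elim: j i => [|j IH] i.
  have -> : \row_k (Dw 0 k 0 i) = 0.
    apply/rowP => k; rewrite !mxE /Dw.
    have -> : w phi (delta_mx 0 k) z 0 = cst z by [].
    by rewrite derive_cst mxE.
  exact: sub0mx.
rewrite step; apply: addmx_sub.
  apply: summx_sub => m _; apply: scalemx_sub; apply: submx_trans (IH m) _.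
  by rewrite /S big_ord_recr /=; apply: addsmxSl.
apply: scalemx_sub; rewrite /S big_ord_recr /=.
apply: submx_trans (addsmxSr _ _); by rewrite genmxE.
Qed.

Lemma Gmat_row n (j : 'I_n) : row j (Gmat D phi n z) = \row_k (Dw j.+1 k 0 i0).
Proof.
apply/rowP => k; rewrite !mxE dir_1d /Dw.
rewrite derive_mx ?mxE; last exact/diff_derivable/w_diff.
have -> : (fun t : R => pi1 (iter j.+1 (phic phi (t *: (delta_mx 0 k : 'rV[R]_(Dalpha d D)))) z))
  = (fun t => w phi (delta_mx 0 k) z j.+1 t 0 i0).
  by apply/funext => t; rewrite pi1E.
by [].
Qed.

Lemma Gmat_block n : BlockOK (Gmat D phi n z) (\matrix_(l < n) Prow D (iter l phi z)).
Proof.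
move=> j; rewrite Gmat_row step rowK e1_i0 scale1r addrK.
apply: summx_sub => m _; apply: scalemx_sub; apply: submx_trans (span j m) _.
apply/sumsmx_subP => l _.
apply: (sumsmx_sup (widen_ord (ltnW (ltn_ord j)) l)) => /=; first exact: ltn_ord.
by rewrite rowK.
Qed.

End PartF.

End MF.
Import MF.

Module MG.
Local Open Scope ring_scope.

Section Final.
Variables (R : realType) (d D : nat).

Lemma orbit_size (phi : 'rV[R]_d -> 'rV[R]_d) n x : size (orbit_seq phi n x) = n.
Proof. by rewrite /orbit_seq size_map size_iota. Qed.

Lemma orbit_nth (phi : 'rV[R]_d -> 'rV[R]_d) n x l : (l < n)%N ->
  nth 0 (orbit_seq phi n x) l = iter l phi x.
Proof. by move=> ln; rewrite /orbit_seq (nth_map 0%N) ?size_iota // nth_iota. Qed.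

Lemma Pm_orbit (phi : 'rV[R]_d -> 'rV[R]_d) n x :
  \matrix_(l < n) Prow D (iter l phi x) = \matrix_(l < n) Prow D (nth 0 (orbit_seq phi n x) l).
Proof. by apply/matrixP => i k; rewrite !mxE orbit_nth. Qed.

Lemma colP n1 n2 (s1 s2 : seq 'rV[R]_d) : size s1 = n1 -> size s2 = n2 ->
  col_mx (\matrix_(l < n1) Prow D (nth 0 s1 l)) (\matrix_(l < n2) Prow D (nth 0 s2 l))
  = \matrix_(i < n1 + n2) Prow D (nth 0 (s1 ++ s2) i).
Proof.
move=> h1 h2; apply/matrixP => i k; rewrite !mxE; case: splitP => [a|b] /= E.
  by rewrite !mxE E nth_cat h1 ltn_ord.
by rewrite !mxE E nth_cat h1 ltnNge leq_addr /= addKn.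
Qed.

Lemma seq_rowfree (hd : (0 < d)%N) (s : seq 'rV[R]_d) n : size s = n -> (n <= 2 * D)%N ->
  uniq s -> row_free (\matrix_(i < n) Prow D (nth 0 s i)).
Proof.
move=> hs hn U; apply: eval_rowfree => // i j E.
apply/val_inj/eqP; rewrite -(nth_uniq 0 _ _ U) ?hs ?ltn_ord //; exact/eqP.
Qed.

End Final.


End MG.
Import MG.

Local Open Scope ring_scope.
Theorem lemma11 (R : realType) (d D : nat) (hd : (0 < d)%N)
  (phi : 'rV[R]_d -> 'rV[R]_d) (hphi : C2_diffeo phi) (x1 y1 : 'rV[R]_d) :
  [/\ uniq (orbit_seq phi (D - 1) x1 ++ orbit_seq phi (D - 1) y1) ->
        row_free (col_mx (Vmat D phi x1) (Vmat D phi y1)),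
      forall (k : nat) (hk : (k <= D - 1)%N),
        uniq (orbit_seq phi (D - 1) x1 ++ orbit_seq phi k y1) ->
        row_free (col_mx (Vmat D phi x1) (mfirst phi hk y1))
    & forall Dp : nat, (Dp <= 2 * D)%N ->
        uniq (orbit_seq phi (Dp - 1) x1) ->
        row_free (Gmat D phi (Dp - 1) x1)].
Proof.
have [g [_ _ [fd fc _ _] _]] := hphi.
have phid := C1_diff fd fc.
split.
- move=> U.
  have B := BlockOK_col (Gmat_block D hd phid x1 (n:=(D - 1)%N)) (Gmat_block D hd phid y1 (n:=(D - 1)%N)).
  rewrite !Pm_orbit colP ?orbit_size // in B.
  apply: tri_rowfree B _; apply: seq_rowfree => //; first by rewrite size_cat !orbit_size.
  lia.
- move=> k hk U.
  have B := BlockOK_col (Gmat_block D hd phid x1 (n:=(D - 1)%N))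
    (BlockOK_trunc hk (Gmat_block D hd phid y1 (n:=(D - 1)%N))).
  have E : \matrix_(i < k) row (widen_ord hk i) (\matrix_(l < (D - 1)%N) Prow D (iter l phi y1))
     = \matrix_(l < k) Prow D (iter l phi y1).
    by apply/matrixP => i j; rewrite !mxE.
  rewrite E !Pm_orbit colP ?orbit_size // in B.
  apply: (@tri_rowfree _ _ _ (col_mx (Vmat D phi x1) (mfirst phi hk y1)) _ B).
  apply: seq_rowfree => //; first by rewrite size_cat !orbit_size.
  lia.
- move=> Dp hDp U.
  have B := Gmat_block D hd phid x1 (n:=(Dp - 1)%N).
  rewrite Pm_orbit in B.
  apply: tri_rowfree B _; apply: seq_rowfree => //; first exact: orbit_size.
  lia.
Qed.
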